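(* In the setting below, suppose Slater's condition $\sum_{j=1}^J\gamma_j\epsilon_j<C$ holds, and let $\mathcal{B}\subseteq\{1,\dots,J\}$ contain exactly $J-1$ indices, the remaining one being $j''$. Then under the allocation $\mathbf{R}^\ast(\mathcal{B})$ the variance constraint of portfolio $j''$ is satisfied, i.e. $\sigma^2_{\mathcal{D},j''}/r_{j''}+\sum_{i\in\mathcal{I}_{j''}}\sigma_i^2/R_i<V_{j''}$.
   Context: There are $J$ portfolios; portfolio $j$ has independent accounts $\mathcal{I}_j$ with standard deviations $\sigma_i>0$ and a dependent block $\mathcal{D}_j$ of $|\mathcal{D}_j|$ accounts whose total has standard deviation $\sigma_{\mathcal{D},j}\ge0$ ($\sigma_{\mathcal{D},j}\sqrt{|\mathcal{D}_j|}=0$ if $\mathcal{D}_j=\emptyset$). Budget $C>0$, variance bounds $V_j>0$. Let $\gamma_j=\sigma_{\mathcal{D},j}\sqrt{|\mathcal{D}_j|}+\sum_{i\in\mathcal{I}_j}\sigma_i>0$, $\epsilon_j=\gamma_j/V_j$, $\alpha(\mathcal{B})=\big(C-\sum_{j\in\mathcal{B}}\gamma_j\epsilon_j\big)/\sum_{j\notin\mathcal{B}}\gamma_j$, and $e_j(\mathcal{B})=\epsilon_j$ for $j\in\mathcal{B}$, $e_j(\mathcal{B})=\alpha(\mathcal{B})$ for $j\notin\mathcal{B}$. The allocation $\mathbf{R}^\ast(\mathcal{B})$ sets $R_i=\sigma_ie_j(\mathcal{B})$ for $i\in\mathcal{I}_j$ and the common realisation number $r_j=\frac{\sigma_{\mathcal{D},j}}{\sqrt{|\mathcal{D}_j|}}e_j(\mathcal{B})$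 for accounts of $\mathcal{D}_j$; it solves the stationarity equations of the Lagrangian of the problem of minimising $\sum_j(\sigma^2_{\mathcal{D},j}/r_j+\sum_{i\in\mathcal{I}_j}\sigma_i^2/R_i)$ over positive reals subject to $\sum_jr_j|\mathcal{D}_j|+\sum_iR_i=C$ and $\sigma^2_{\mathcal{D},j}/r_j+\sum_{i\in\mathcal{I}_j}\sigma_i^2/R_i\le V_j$, with the constraints in $\mathcal{B}$ active. Terms involving $r_j$ are absent when $\mathcal{D}_j=\emptyset$. *)

(* Defs.v *)
From HB Require Import structures.
From mathcomp Require Import all_boot all_order all_algebra.
Set Implicit Arguments. Unset Strict Implicit. Unset Printing Implicit Defensive.
Import Order.TTheory GRing.Theory Num.Theory.
Local Open Scope ring_scope.

Section Portfolios.
Variable R : rcfType.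
Variable J : nat.
(* portfolio j has nI j independent accounts with std devs @sI j i,
   and a dependent block of nD j accounts whose total has std dev sD j *)
Variable nI : 'I_J -> nat.
Variable sI : forall j : 'I_J, 'I_(nI j) -> R.
Variable nD : 'I_J -> nat.
Variable sD : 'I_J -> R.
Variable C : R.
Variable V : 'I_J -> R.

Definition gamma (j : 'I_J) : R :=
  sD j * Num.sqrt (nD j)%:R + \sum_(i < nI j) @sI j i.

Definition eps (j : 'I_J) : R := gamma j / V j.

Definition alpha (B : {set 'I_J}) : R :=
  (C - \sum_(j in B) gamma j * eps j) / \sum_(j | j \notin B) gamma j.

Definition e (B : {set 'I_J}) (j : 'I_J) : R :=
  if j \in B then eps j else alpha B.

Definition Rstar (B : {set 'I_J}) (j : 'I_J) (i : 'I_(nI j)) : R :=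
  @sI j i * e B j.
Definition rstar (B : {set 'I_J}) (j : 'I_J) : R :=
  sD j / Num.sqrt (nD j)%:R * e B j.

Definition port_var (r : 'I_J -> R) (Ri : forall j : 'I_J, 'I_(nI j) -> R)
  (j : 'I_J) : R :=
  (if nD j == 0%N then 0 else sD j ^+ 2 / r j)
  + \sum_(i < nI j) @sI j i ^+ 2 / Ri j i.

End Portfolios.

(* Main.v *)
Require Import Defs.
From HB Require Import structures.
From mathcomp Require Import all_boot all_order all_algebra.
From mathcomp Require Import zify ring lra.
Import Order.TTheory GRing.Theory Num.Theory.
Local Open Scope ring_scope.

Lemma sq_div_aux (R : rcfType) (x s a : R) : s != 0 ->
  x ^+ 2 / (x / s * a) = x * s / a.
Proof.
move=> hs; have [->|hx] := eqVneq x 0; first by rewrite !mul0r expr0n /= mul0r.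
have [->|ha] := eqVneq a 0; first by rewrite !mulr0 !invr0 !mulr0.
by field; rewrite hx hs ha.
Qed.

Theorem lemma7 (R : rcfType) (J : nat) (nI : 'I_J -> nat)
  (sI : forall j : 'I_J, 'I_(nI j) -> R) (nD : 'I_J -> nat) (sD : 'I_J -> R)
  (C : R) (V : 'I_J -> R)
  (hsI : forall (j : 'I_J) (i : 'I_(nI j)), 0 < sI j i)
  (hsD : forall j, 0 <= sD j)
  (hC : 0 < C) (hV : forall j, 0 < V j)
  (hgamma : forall j, 0 < gamma sI nD sD j)
  (slater : \sum_(j < J) gamma sI nD sD j * eps sI nD sD V j < C)
  (B : {set 'I_J}) (j'' : 'I_J)
  (hB : #|B| = J.-1) (hj : j'' \notin B) :
  port_var sI nD sD (rstar sI nD sD C V B) (Rstar sI nD sD C V B) j''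
    < V j''.
Proof.
have hC1 : ~: B = [set j''].
  apply/eqP; rewrite eq_sym eqEcard sub1set inE hj cards1 /=.
  have := cardsC B; rewrite card_ord hB => h.
  have : (0 < J)%N by case: (j'') => m /=; lia.
  move=> hJ; move: h; set x := #|~: B|; move: x => x; case: (J) hJ => //= n _; lia.
have hnot : forall j, (j \notin B) = (j == j'').
  by move=> j; rewrite -in_setC hC1 inE.
set g := gamma sI nD sD; set ep := eps sI nD sD V.
have hsn : \sum_(j | j \notin B) g j = g j''.
  by rewrite (big_pred1 j'').
have hsB : \sum_(j in B) g j * ep j = \sum_(j < J) g j * ep j - g j'' * ep j''.
  rewrite [in RHS](bigD1 j'') //= addrC addrK.
  by apply: eq_bigl => j; rewrite -hnot negbK.
have hal : alpha sI nD sD C V B = (C - \sum_(j in B) g j * ep j) / g j''.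
  by rewrite /alpha hsn.
have hg := hgamma j''; have hv := hV j''.
have hep : 0 < ep j'' by rewrite /ep /eps divr_gt0.
have hlt : ep j'' < alpha sI nD sD C V B.
  rewrite hal hsB ltr_pdivlMr // mulrC; lra.
have hapos : 0 < alpha sI nD sD C V B by apply: lt_trans hlt.
have heB : e sI nD sD C V B j'' = alpha sI nD sD C V B by rewrite /e (negbTE hj).
set a := alpha sI nD sD C V B in hlt hapos heB.
have hpv : port_var sI nD sD (rstar sI nD sD C V B) (Rstar sI nD sD C V B) j''
   = g j'' / a.
  rewrite /port_var /rstar /Rstar heB /g /gamma mulrDl.
  congr (_ + _).
    case: eqP => [->|hn]; first by rewrite sqrtr0 mulr0 mul0r.
    rewrite sq_div_aux // sqrtr_eq0 lern0; apply/eqP; exact: hn.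
  rewrite mulr_suml; apply: eq_bigr => i _.
  have := hsI j'' i; set x := sI j'' i => hx.
  by rewrite expr2 invfM mulrACA mulfV ?mul1r // gt_eqF.
rewrite hpv.
have -> : V j'' = g j'' / ep j'' by rewrite /ep /eps invf_div mulrC divfK // gt_eqF.
rewrite ltr_pM2l // ltf_pV2 //.
Qed.
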